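(* Consider an agent-dependent SDP PEP for distributed optimization with $n$ agents, all of which are equivalent, and assume it admits a worst-case (optimal) solution. Then there is a worst-case instance such that (i) the worst-case sequences of iterates are unitary transformations of each other: there exist $R_i\in\mathbb{R}^{d\times d}$ with $R_i^TR_i=I$ such that $x_i^k=R_ix_1^k$ for all agents $i$ and all iterations $k$; and (ii) the worst-case local functions have equal values at their own iterates, $f_i(x_i^k)=f_j(x_j^k)$ for all $i,j$ and all $k$, and can be chosen identical up to a unitary change of variables: $f_i(x)=f_1(R_i^Tx)$ for all $i$, where $f_1$ is a function interpolating agent 1's worst-case iterates, gradients and function values.
   Context: Distributed optimization: $n$ agents with local functions $f_i:\mathbb{R}^d\to\mathbb{R}$ minimize $\frac1n\sum_if_i(x)$ via an algorithm using local gradient evaluations, consensus steps with averaging matrices, and linear combinations of local variables. In the agent-dependent SDP PEP, each agent $i$ holds $p$ vector variables (iterates $x_i^k$, gradients $g_i^k=\nabla f_i(x_i^k)$, other local variables) as columns of $P_i\in\mathbb{R}^{d\times p}$ in a common order and $q$ function values $f_i^k=f_i(x_i^k)$ in $f_i\in\mathbb{R}^q$; the variables are $F=[f_1^T\dots f_n^T]$ and $G=P^TP\succeq0$ with $G_{ij}=P_i^TP_j$; objective and constraints (including interpolation constraints ensuring each agent's triplets $(x_i^k,g_i^k,f_i^k)$ are interpolated by a function of the given class) are linear or LMI in $(F,G)$. A worst-case instance is obtained from an optimal $(F,G)$ by factoring $G=P^TP$ and interpolating each agent's triplets. Agents $i,j$ are equivalent if swapping their blocks in any feasible solution yields a feasible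 solution with the same objective value. *)

(* Defs.v *)
From HB Require Import structures.
From mathcomp Require Import all_boot all_order all_algebra.
From mathcomp Require Import all_classical all_reals all_analysis.
Set Implicit Arguments. Unset Strict Implicit. Unset Printing Implicit Defensive.
Import Order.TTheory GRing.Theory Num.Theory.
Import numFieldNormedType.Exports.
Local Open Scope ring_scope.

(*  n agents, each with p vector variables and q function values.          *)
(*  F : 'M_(n,q), row i = f_i^T (the q function values of agent i).       *)
(*  G : 'M_(n*p), the Gram matrix P^T P; the column of the global index    *)
(*      pidx i a (agent i, local variable a) is the a-th column of P_i,    *)
(*      so the (i,j) block of G is P_i^T P_j.                               *)

Definition pidx (n p : nat) (i : 'I_n) (a : 'I_p) : 'I_(n * p) := mxvec_index i a.

Definition pidx_inv (n p : nat) (u : 'I_(n * p)) : 'I_n * 'I_p :=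
  enum_val (cast_ord (esym (mxvec_cast n p)) u).

Definition blk_swap (n p : nat) (i j : 'I_n) (u : 'I_(n * p)) : 'I_(n * p) :=
  let k := (pidx_inv u).1 in
  pidx (if k == i then j else if k == j then i else k) (pidx_inv u).2.

Definition swapG (R : Type) (n p : nat) (i j : 'I_n) (G : 'M[R]_(n * p)) :
  'M[R]_(n * p) := \matrix_(u, v) G (blk_swap i j u) (blk_swap i j v).

Definition swapF (R : Type) (n q : nat) (i j : 'I_n) (F : 'M[R]_(n, q)) :
  'M[R]_(n, q) := xrow i j F.

Definition psd (R : numDomainType) (m : nat) (G : 'M[R]_m) : Prop :=
  G^T = G /\ forall z : 'rV[R]_m, 0 <= (z *m G *m z^T) 0 0.

Definition linFG (R : pzRingType) (n q m : nat)
  (A : 'M[R]_(n, q)) (B : 'M[R]_m) (F : 'M[R]_(n, q)) (G : 'M[R]_m) : R :=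
  \sum_(i < n) \sum_(k < q) A i k * F i k + \sum_(u < m) \sum_(v < m) B u v * G u v.

(* Linear equalities are two inequalities, and an LMI  M(F,G) ⪰ 0  with M
   affine is the family of affine inequalities  -z^T M(F,G) z <= 0  (z
   ranging over all vectors).  Hence every "linear or LMI" constraint set,
   in particular the interpolation constraints, is of this form. *)
Definition pep_feasible (R : numDomainType) (n p q : nat) (I : Type)
  (cA : I -> 'M[R]_(n, q)) (cB : I -> 'M[R]_(n * p)) (cb : I -> R)
  (F : 'M[R]_(n, q)) (G : 'M[R]_(n * p)) : Prop :=
  psd G /\ forall c : I, linFG (cA c) (cB c) F G <= cb c.

Definition pep_optimal (R : numDomainType) (n p q : nat) (I : Type)
  (cA : I -> 'M[R]_(n, q)) (cB : I -> 'M[R]_(n * p)) (cb : I -> R)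
  (oA : 'M[R]_(n, q)) (oB : 'M[R]_(n * p))
  (F : 'M[R]_(n, q)) (G : 'M[R]_(n * p)) : Prop :=
  pep_feasible cA cB cb F G /\
  forall F' G', pep_feasible cA cB cb F' G' -> linFG oA oB F' G' <= linFG oA oB F G.

Definition agents_equivalent (R : numDomainType) (n p q : nat) (I : Type)
  (cA : I -> 'M[R]_(n, q)) (cB : I -> 'M[R]_(n * p)) (cb : I -> R)
  (oA : 'M[R]_(n, q)) (oB : 'M[R]_(n * p)) (i j : 'I_n) : Prop :=
  forall F G, pep_feasible cA cB cb F G ->
    pep_feasible cA cB cb (swapF i j F) (swapG i j G) /\
    linFG oA oB (swapF i j F) (swapG i j G) = linFG oA oB F G.

Definition is_gradient (R : realType) (d : nat) (f : 'cV[R]_d -> R^o)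
  (x g : 'cV[R]_d) : Prop :=
  differentiable f x /\ forall h : 'cV[R]_d, 'd f x h = (g^T *m h) 0 0.

Definition locvar (R : Type) (d n p : nat) (P : 'M[R]_(d, n * p))
  (i : 'I_n) (a : 'I_p) : 'cV[R]_d := col (pidx i a) P.

(* f interpolates the triplets (x_i^k, g_i^k, f_i^k), k < q, of agent i:
   x_i^k = local variable xc k of agent i, g_i^k = local variable gc k,
   f_i^k = F i k; i.e. f(x_i^k) = f_i^k and ∇f(x_i^k) = g_i^k *)
Definition interpolates (R : realType) (d n p q : nat)
  (xc gc : 'I_q -> 'I_p) (F : 'M[R]_(n, q)) (P : 'M[R]_(d, n * p))
  (i : 'I_n) (f : 'cV[R]_d -> R^o) : Prop :=
  forall k : 'I_q,
    f (locvar P i (xc k)) = F i k /\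
    is_gradient f (locvar P i (xc k)) (locvar P i (gc k)).

Definition orthogonal_mx (R : pzRingType) (d : nat) (Q : 'M[R]_d) : Prop :=
  Q^T *m Q = 1%:M.

(* Main.v *)
Require Import Defs.
From HB Require Import structures.
From mathcomp Require Import all_boot all_order all_algebra.
From mathcomp Require Import all_classical all_reals all_analysis.
From mathcomp Require Import ring lra.
From mathcomp Require Import fingroup perm.
Import Order.TTheory GRing.Theory Num.Theory.
Import numFieldNormedType.Exports.
Local Open Scope ring_scope.

Section Idx.
Variables (n p : nat).

Lemma pidxK (i : 'I_n) (a : 'I_p) : pidx_inv (pidx i a) = (i, a).
Proof. by rewrite /pidx_inv /pidx /mxvec_index cast_ordK enum_rankK. Qed.

Lemma pidx_invK (u : 'I_(n * p)) : pidx (pidx_inv u).1 (pidx_inv u).2 = u.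
Proof. by rewrite /pidx_inv /pidx /mxvec_index -surjective_pairing enum_valK cast_ordKV. Qed.

Lemma pidx_inj i a j b : pidx i a = pidx j b :> 'I_(n * p) -> i = j /\ a = b.
Proof. by move=> /(congr1 (@pidx_inv n p)); rewrite !pidxK => -[-> ->]. Qed.

Lemma sum_pidx (V : nmodType) (f : 'I_(n * p) -> V) :
  \sum_u f u = \sum_i \sum_a f (pidx i a).
Proof.
rewrite pair_bigA /=.
rewrite (reindex (fun ia : 'I_n * 'I_p => pidx ia.1 ia.2)) /=.
  by apply: eq_bigr => -[i a].
exists (@pidx_inv n p) => [[i a] _|u _]; [by rewrite pidxK | exact: pidx_invK].
Qed.

Definition bp (s : {perm 'I_n}) (u : 'I_(n * p)) : 'I_(n * p) :=
  pidx (s (pidx_inv u).1) (pidx_inv u).2.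

Lemma bp_pidx s i a : bp s (pidx i a) = pidx (s i) a.
Proof. by rewrite /bp pidxK. Qed.

Lemma bpM s t u : bp (s * t) u = bp t (bp s u).
Proof. by rewrite /bp pidxK permM. Qed.

Lemma bp1 u : bp 1 u = u.
Proof. by rewrite /bp perm1 pidx_invK. Qed.

Lemma blk_swapE i j u : blk_swap i j u = bp (tperm i j) u.
Proof.
rewrite /blk_swap /bp; congr pidx.
by case: tpermP => [->|->|/eqP/negPf-> /eqP/negPf->]; rewrite ?eqxx //;
  case: eqP.
Qed.

Lemma bp_inj s : injective (bp s).
Proof.
move=> u v; rewrite -[u]pidx_invK -[v]pidx_invK !bp_pidx.
by move/pidx_inj=> [/perm_inj -> ->].
Qed.
End Idx.
Arguments bp {n p} s u.


Section Sym.
Variables (R : realType) (n p q : nat).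
Variables (I : Type) (cA : I -> 'M[R]_(n, q)) (cB : I -> 'M[R]_(n * p)) (cb : I -> R)
  (oA : 'M[R]_(n, q)) (oB : 'M[R]_(n * p)).
Hypothesis hequiv : forall i j : 'I_n, agents_equivalent cA cB cb oA oB i j.

Definition permF (s : {perm 'I_n}) (F : 'M[R]_(n, q)) : 'M[R]_(n, q) :=
  \matrix_(i, k) F (s i) k.
Definition permG (s : {perm 'I_n}) (G : 'M[R]_(n * p)) : 'M[R]_(n * p) :=
  \matrix_(u, v) G (bp s u) (bp s v).

Definition good s := forall F G, pep_feasible cA cB cb F G ->
  pep_feasible cA cB cb (permF s F) (permG s G) /\
  linFG oA oB (permF s F) (permG s G) = linFG oA oB F G.

Lemma good1 : good 1.
Proof.
move=> F G fG.
have -> : permF 1 F = F by apply/matrixP => i k; rewrite mxE perm1.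
have -> : permG 1 G = G by apply/matrixP => u v; rewrite mxE !bp1.
by [].
Qed.

Lemma goodT i j : good (tperm i j).
Proof.
move=> F G fG.
have -> : permF (tperm i j) F = swapF i j F by apply/matrixP => a k; rewrite !mxE.
have -> : permG (tperm i j) G = swapG i j G
  by apply/matrixP => u v; rewrite !mxE !blk_swapE.
exact: hequiv.
Qed.

Lemma goodM s t : good s -> good t -> good (s * t).
Proof.
move=> gs gt F G fG.
have -> : permF (s * t) F = permF s (permF t F)
  by apply/matrixP => a k; rewrite !mxE permM.
have -> : permG (s * t) G = permG s (permG t G)
  by apply/matrixP => u v; rewrite !mxE !bpM.
have [f1 e1] := gt F G fG; have [f2 e2] := gs _ _ f1.
by split => //; rewrite e2 e1.
Qed.

Lemma good_all s : good s.
Proof.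
have [ts -> _] := prod_tpermP s.
elim: ts => [|t ts IH]; first by rewrite big_nil; exact: good1.
by rewrite big_cons; apply: goodM => //; exact: goodT.
Qed.


Definition Nn : R := #|{perm 'I_n}|%:R.

Lemma Nn_gt0 : 0 < Nn.
Proof. by rewrite /Nn ltr0n; apply/card_gt0P; exists (1%g : {perm 'I_n}). Qed.

Definition avgF (F : 'M[R]_(n, q)) := Nn^-1 *: \sum_(s : {perm 'I_n}) permF s F.
Definition avgG (G : 'M[R]_(n * p)) := Nn^-1 *: \sum_(s : {perm 'I_n}) permG s G.

Lemma avgFE F i k : avgF F i k = Nn^-1 * \sum_(s : {perm 'I_n}) F (s i) k.
Proof. by rewrite /avgF !mxE summxE; congr (_ * _); apply: eq_bigr => s _; rewrite mxE. Qed.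

Lemma avgGE G u v : avgG G u v = Nn^-1 * \sum_(s : {perm 'I_n}) G (bp s u) (bp s v).
Proof. by rewrite /avgG !mxE summxE; congr (_ * _); apply: eq_bigr => s _; rewrite mxE. Qed.

Lemma avgF_inv F (t : {perm 'I_n}) i k : avgF F (t i) k = avgF F i k.
Proof.
rewrite !avgFE; congr (_ * _).
rewrite [RHS](reindex_inj (mulgI t)) /=; apply: eq_bigr => s _; by rewrite permM.
Qed.

Lemma avgG_inv G (t : {perm 'I_n}) u v : avgG G (bp t u) (bp t v) = avgG G u v.
Proof.
rewrite !avgGE; congr (_ * _).
rewrite [RHS](reindex_inj (mulgI t)) /=; apply: eq_bigr => s _; by rewrite !bpM.
Qed.

Lemma linFG_avg A B F G :
  linFG A B (avgF F) (avgG G) = Nn^-1 * \sum_(s : {perm 'I_n}) linFG A B (permF s F) (permG s G).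
Proof.
rewrite /linFG big_split /= mulrDr; congr (_ + _).
- transitivity (\sum_i \sum_k \sum_(s : {perm 'I_n}) Nn^-1 * (A i k * F (s i) k)).
    apply: eq_bigr => i _; apply: eq_bigr => k _.
    by rewrite avgFE mulrCA !mulr_sumr.
  rewrite mulr_sumr; under eq_bigr => i _ do rewrite exchange_big /=.
  rewrite exchange_big /=; apply: eq_bigr => s _.
  rewrite mulr_sumr; apply: eq_bigr => i _; rewrite mulr_sumr; apply: eq_bigr => k _.
  by rewrite mxE.
- transitivity (\sum_u \sum_v \sum_(s : {perm 'I_n}) Nn^-1 * (B u v * G (bp s u) (bp s v))).
    apply: eq_bigr => i _; apply: eq_bigr => k _.
    by rewrite avgGE mulrCA !mulr_sumr.
  rewrite mulr_sumr; under eq_bigr => i _ do rewrite exchange_big /=.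
  rewrite exchange_big /=; apply: eq_bigr => s _.
  rewrite mulr_sumr; apply: eq_bigr => i _; rewrite mulr_sumr; apply: eq_bigr => k _.
  by rewrite mxE.
Qed.

Lemma quad_avg (z : 'rV[R]_(n * p)) G :
  (z *m avgG G *m z^T) 0 0 = Nn^-1 * \sum_(s : {perm 'I_n}) (z *m permG s G *m z^T) 0 0.
Proof.
rewrite /avgG -scalemxAr -scalemxAl mxE; congr (_ * _).
rewrite mulmx_sumr mulmx_suml summxE //.
Qed.

Lemma feasible_avg F G : pep_feasible cA cB cb F G ->
  pep_feasible cA cB cb (avgF F) (avgG G).
Proof.
move=> fG; have gd s := good_all s F G fG.
split.
- split.
  + apply/matrixP => u v; rewrite mxE !avgGE; congr (_ * _); apply: eq_bigr => s _.
    have [[[/matrixP hT _] _] _] := gd s.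
    by have := hT u v; rewrite !mxE.
  + move=> z; rewrite quad_avg; apply: mulr_ge0; first by rewrite invr_ge0 ltW // Nn_gt0.
    apply: sumr_ge0 => s _; by have [[[_ ->] _] _] := gd s.
- move=> c; rewrite linFG_avg.
  apply: (@le_trans _ _ (Nn^-1 * \sum_(s : {perm 'I_n}) cb c)).
    apply: ler_wpM2l; first by rewrite invr_ge0 ltW // Nn_gt0.
    apply: ler_sum => s _; by have [[_ ->] _] := gd s.
  rewrite sumr_const -[#|_|]/(#|{perm 'I_n}|) -mulr_natl mulrA mulVf ?mul1r //.
  by rewrite gt_eqF // Nn_gt0.
Qed.

Lemma obj_avg F G : pep_feasible cA cB cb F G ->
  linFG oA oB (avgF F) (avgG G) = linFG oA oB F G.
Proof.
move=> fG; rewrite linFG_avg.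
rewrite (eq_bigr (fun _ => linFG oA oB F G)); last by move=> s _; have [_ ->] := good_all s F G fG.
rewrite sumr_const -[#|_|]/(#|{perm 'I_n}|) -mulr_natl mulrA mulVf ?mul1r //.
by rewrite gt_eqF // Nn_gt0.
Qed.

Lemma optimal_avg F G : pep_optimal cA cB cb oA oB F G ->
  pep_optimal cA cB cb oA oB (avgF F) (avgG G).
Proof.
move=> [fG opt]; split; first exact: feasible_avg.
by move=> F' G' f'; rewrite obj_avg //; exact: opt.
Qed.

End Sym.


Section Chol.
Variable R : realType.

Lemma qf_block m (M : 'M[R]_(1 + m)) (tau : R) (z : 'rV[R]_m) :
  M^T = M ->
  (row_mx (tau%:M) z *m M *m (row_mx (tau%:M) z)^T) 0 0 =
  tau * (tau * M 0 0) + 2 * tau * ((ursubmx M *m z^T) 0 0) +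
  (z *m drsubmx M *m z^T) 0 0.
Proof.
move=> MT.
have hdl : dlsubmx M = (ursubmx M)^T by rewrite trmx_ursub MT.
have hul : ulsubmx M = (M 0 0)%:M.
  rewrite [LHS]mx11_scalar mxE; congr (_%:M); rewrite !mxE; f_equal; exact/val_inj.
rewrite -[M in LHS]submxK mul_row_block tr_row_mx mul_row_col tr_scalar_mx.
rewrite hdl hul !mul_scalar_mx mul_mx_scalar.
rewrite !mxE /= mulr1n.
set U := ursubmx M; set D := drsubmx M.
have e1 : \sum_(j < m) z 0 j * U^T j 0 = \sum_(j < m) U 0 j * z^T j 0.
  by apply: eq_bigr => j _; rewrite !mxE mulrC.
have e2 : \sum_(j < m) (tau *: U + z *m D) 0 j * z^T j 0 =
   tau * \sum_(j < m) U 0 j * z^T j 0 + \sum_(j < m) (z *m D) 0 j * z^T j 0.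
  rewrite mulr_sumr -big_split; apply: eq_bigr => j _.
  by rewrite mxE [(tau *: U) 0 j]mxE mulrDl mulrA.
rewrite e1 e2; ring.
Qed.

Lemma sub00 m k (A B : 'M[R]_(m.+1, k.+1)) : (A - B) 0 0 = A 0 0 - B 0 0.
Proof. by rewrite !mxE. Qed.

Lemma quad0 m (M : 'M[R]_m) : ((0 : 'rV[R]_m) *m M *m (0 : 'rV[R]_m)^T) 0 0 = 0.
Proof. by rewrite mul0mx mul0mx mxE. Qed.

Lemma chol_step m
  (IH : forall N : 'M[R]_m, psd N -> exists Y : 'M[R]_m, Y^T *m Y = N)
  (M : 'M[R]_(1 + m)) : psd M -> exists X : 'M[R]_(1 + m), X^T *m X = M.
Proof.
move=> [MT Mq].
set a := M 0 0; set U := ursubmx M; set D := drsubmx M.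
have q (z : 'rV[R]_m) (tau : R) : 0 <= tau * (tau * a) + 2 * tau * ((U *m z^T) 0 0) + (z *m D *m z^T) 0 0.
  by have := Mq (row_mx tau%:M z); rewrite qf_block.
have DT : D^T = D by rewrite /D trmx_drsub MT.
have hdl : dlsubmx M = U^T by rewrite /U trmx_ursub MT.
have hul : ulsubmx M = a%:M.
  by rewrite [LHS]mx11_scalar !mxE (_ : lshift m 0 = 0) //; apply/val_inj.
have ha : 0 <= a.
  have := q 0 1; rewrite trmx0 mulmx0 mul0mx !mxE !mul1r mulr0 addr0.
  by rewrite big1 ?addr0 // => j _; rewrite !mxE mul0r.
have [a0|an0] := eqVneq a 0.
- have U0 : U = 0.
    apply/matrixP => i j; rewrite ord1 [RHS]mxE.
    set z : 'rV[R]_m := delta_mx 0 j.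
    have hc : (U *m z^T) 0 0 = U 0 j by rewrite trmx_delta -colE mxE.
    set e := (z *m D *m z^T) 0 0.
    have he : 0 <= e by have := q z 0; rewrite !(mul0r, mulr0, add0r).
    apply/eqP; apply: contraT => cn0.
    have := q z (- (e + 1) / (2 * U 0 j)).
    have -> : 2 * (- (e + 1) / (2 * U 0 j)) * (U *m z^T) 0 0 = - (e + 1).
      by rewrite hc; field.
    rewrite a0 !mulr0 add0r -/e; lra.
  have [Y hY] : exists Y : 'M[R]_m, Y^T *m Y = D.
    apply: IH; split => // z; have := q z 0.
    by rewrite !(mul0r, mulr0, add0r).
  exists (block_mx 0 0 0 Y).
  rewrite tr_block_mx mulmx_block -[RHS]submxK hul hdl -/U -/D U0 a0 hY.
  have -> : (0 : R)%:M = 0 :> 'M[R]_1 by apply/matrixP => i k; rewrite !mxE mul0rn.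
  by rewrite !trmx0 !mulmx0 !mul0mx !addr0 !add0r.
- have apos : 0 < a by rewrite lt_def an0 ha.
  set s := Num.sqrt a.
  have spos : 0 < s by rewrite sqrtr_gt0.
  have ss : s * s = a by rewrite -expr2 sqr_sqrtr // ltW.
  set r : 'rV[R]_m := s^-1 *: U.
  set S := D - r^T *m r.
  have hS z : (z *m S *m z^T) 0 0 = (z *m D *m z^T) 0 0 - ((U *m z^T) 0 0) ^+ 2 / a.
    rewrite mulmxBr mulmxBl sub00; congr (_ - _).
    rewrite !mulmxA -mulmxA -[z *m r^T](trmxK (z *m r^T)) trmx_mul trmxK.
    rewrite /r -scalemxAl mxE big_ord1 !mxE -ss; field.
    by rewrite gt_eqF.
  have [Y hY] : exists Y : 'M[R]_m, Y^T *m Y = S.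
    apply: IH; split.
      by rewrite /S linearB /= trmx_mul trmxK DT.
    move=> z; rewrite hS; have := q z (- ((U *m z^T) 0 0) / a).
    set c := (U *m z^T) 0 0; set e := (z *m D *m z^T) 0 0.
    have -> : - c / a * (- c / a * a) + 2 * (- c / a) * c + e = e - c ^+ 2 / a.
      by field; rewrite an0.
    by [].
  exists (block_mx s%:M r 0 Y).
  rewrite tr_block_mx mulmx_block -[RHS]submxK hul hdl -/U -/D hY.
  rewrite !trmx0 !mulmx0 !mul0mx !addr0 tr_scalar_mx mul_scalar_mx.
  rewrite !mul_scalar_mx mul_mx_scalar scale_scalar_mx ss /S addrC subrK.
  by rewrite /r scalerA mulfV ?gt_eqF // scale1r linearZ /= scalerA mulfV ?gt_eqF // scale1r.
Qed.

Lemma chol m (M : 'M[R]_m) : psd M -> exists X : 'M[R]_m, X^T *m X = M.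
Proof.
elim: m M => [|m IH] M hM.
  by exists 0; apply/matrixP => -[].
exact: (@chol_step m IH (M : 'M[R]_(1 + m)) hM).
Qed.
End Chol.


Section Grad.
Variables (R : realType) (d : nat) (Q : 'M[R]_d).

Lemma mulQ_sum : (fun x : 'cV[R]_d => Q *m x) =
  \sum_(j < d) (fun x : 'cV[R]_d => x j 0 *: col j Q).
Proof.
rewrite fct_sumE; apply/funext => x; apply/matrixP => i k.
rewrite !mxE summxE; apply: eq_bigr => j _; rewrite !mxE ord1 mulrC //.
Qed.

Lemma mulQ_differentiable (x : 'cV[R]_d) :
  differentiable (fun y : 'cV[R]_d => Q *m y) x.
Proof.
rewrite mulQ_sum; apply: differentiable_sum => j.
apply: differentiableZl; exact: differentiable_coord.
Qed.

Lemma mulQ_continuous : continuous (fun y : 'cV[R]_d => Q *m y).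
Proof. move=> x; exact/differentiable_continuous/mulQ_differentiable. Qed.

Lemma mulQ_diff (x : 'cV[R]_d) :
  'd (fun y : 'cV[R]_d => Q *m y) x = (fun y => Q *m y) :> (_ -> _).
Proof.
pose L : {linear 'cV[R]_d -> 'cV[R]_d} := mulmx Q.
have -> : (fun y : 'cV[R]_d => Q *m y) = L by [].
apply: diff_lin; exact: mulQ_continuous.
Qed.

Lemma is_gradient_comp (f : 'cV[R]_d -> R^o) (x g : 'cV[R]_d) :
  is_gradient f (Q *m x) g ->
  is_gradient (fun y => f (Q *m y)) x (Q^T *m g).
Proof.
move=> [df hf].
have dL := mulQ_differentiable x.
have -> : (fun y => f (Q *m y)) = f \o (fun y => Q *m y) by [].
split; first exact: differentiable_comp.
move=> h; rewrite diff_comp //= mulQ_diff hf trmx_mul trmxK mulmxA //.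
Qed.
End Grad.


Lemma sum_delta (R : pzSemiRingType) m (i : 'I_m) (f : 'I_m -> R) :
  \sum_k (k == i)%:R * f k = f i.
Proof.
rewrite (bigD1 i) //= eqxx mul1r big1 ?addr0 // => k /negPf ->; by rewrite mul0r.
Qed.

Lemma perm2 n (i j i' j' : 'I_n) : i != j -> i' != j' ->
  exists t : {perm 'I_n}, t i = i' /\ t j = j'.
Proof.
move=> ij ij'; set x := tperm i i' j.
exists (tperm i i' * tperm x j')%g; rewrite !permM tpermL; split; last exact: tpermL.
apply: tpermD => //; last by rewrite eq_sym.
by rewrite /x -{2}(tpermL i i') (inj_eq perm_inj) eq_sym.
Qed.

Section Struct.
Variables (R : realType) (n p : nat) (Gb : 'M[R]_(n * p)).
Hypothesis Ginv : forall (t : {perm 'I_n}) u v, Gb (bp t u) (bp t v) = Gb u v.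
Variable a1 : 'I_n.

Definition Am a b := Gb (pidx a1 a) (pidx a1 b).
Definition Bm a b := match [pick j | j != a1] with
  | Some j => Gb (pidx a1 a) (pidx j b) | None => 0 end.

Lemma Gform i j a b : Gb (pidx i a) (pidx j b) = if i == j then Am a b else Bm a b.
Proof.
case: eqP => [<-|/eqP ij].
  by rewrite /Am -[RHS](Ginv (tperm a1 i)) !bp_pidx tpermL.
rewrite /Bm; case: pickP => [j0 /= hj0|none]; last first.
  have := none i; have := none j; rewrite /= => /negbFE/eqP hj /negbFE/eqP hi.
  by rewrite hi hj eqxx in ij.
have [t [h1 h2]] : exists t : {perm 'I_n}, t a1 = i /\ t j0 = j.
  by apply: perm2 => //; rewrite eq_sym.
by rewrite -[RHS](Ginv t) !bp_pidx h1 h2.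
Qed.

Definition Sc (c : 'I_n -> R) : 'M[R]_(n * p, p) :=
  \matrix_(u, a) (c (pidx_inv u).1 * ((pidx_inv u).2 == a)%:R).

Lemma Sc_pidx c i a' a : Sc c (pidx i a') a = c i * (a' == a)%:R.
Proof. by rewrite mxE pidxK. Qed.

Lemma sum_delta_r m (i : 'I_m) (f : 'I_m -> R) : \sum_k f k * (k == i)%:R = f i.
Proof. by rewrite -[RHS](@sum_delta R m i f); apply: eq_bigr => k _; rewrite mulrC. Qed.

Lemma compress c a b : ((Sc c)^T *m Gb *m Sc c) a b =
  (\sum_i c i) ^+ 2 * Bm a b + (\sum_i c i ^+ 2) * (Am a b - Bm a b).
Proof.
rewrite mxE sum_pidx.
transitivity (\sum_j \sum_i (c i * c j * Bm a b + (i == j)%:R * (c i * c j * (Am a b - Bm a b)))).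
  apply: eq_bigr => j _.
  under eq_bigr => b' _ do rewrite Sc_pidx mxE sum_pidx mulrA.
  rewrite sum_delta_r mulr_suml; apply: eq_bigr => i _.
  rewrite mulr_suml (eq_bigr (fun a' => (a' == a)%:R * (c i * Gb (pidx i a') (pidx j b) * c j))); last first.
    by move=> a' _; rewrite mxE Sc_pidx eq_sym; ring.
  rewrite sum_delta Gform; case: eqP => [->|_]; rewrite ?mul1r ?mul0r ?addr0; ring.
under eq_bigr => j _ do rewrite big_split /=.
rewrite big_split /= [X in _ + X](eq_bigr (fun j => c j * c j * (Am a b - Bm a b))); last first.
  by move=> j _; rewrite sum_delta.
congr (_ + _).
  rewrite expr2 mulr_suml mulr_suml; apply: eq_bigr => j _.
  rewrite mulr_sumr mulr_suml; apply: eq_bigr => i _; ring.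
by rewrite mulr_suml; apply: eq_bigr => j _; rewrite expr2.
Qed.
End Struct.


Section Aux.
Variable R : realType.

Lemma psd_cong m k (G : 'M[R]_m) (S : 'M[R]_(m, k)) : psd G -> psd (S^T *m G *m S).
Proof.
move=> [GT Gq]; split.
  by rewrite !trmx_mul trmxK GT mulmxA.
move=> z; have := Gq (z *m S^T).
by rewrite trmx_mul trmxK !mulmxA.
Qed.

Lemma psd_scale m (c : R) (M : 'M[R]_m) : 0 <= c -> psd M -> psd (c *: M).
Proof.
move=> c0 [MT Mq]; split; first by rewrite linearZ /= MT.
move=> z; rewrite -scalemxAr -scalemxAl mxE; exact: mulr_ge0.
Qed.

Lemma sum_kron n (i j : 'I_n) (x y x' y' : R) :
  \sum_k ((k == i)%:R * x + y) * ((k == j)%:R * x' + y') =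
  (i == j)%:R * (x * x') + x * y' + y * x' + n%:R * (y * y').
Proof.
transitivity (\sum_(k < n) ((k == i)%:R * ((k == j)%:R * (x * x')) + (k == i)%:R * (x * y')
   + (k == j)%:R * (y * x') + y * y')).
  by apply: eq_bigr => k _; ring.
rewrite !big_split /= !sum_delta sumr_const card_ord mulr_natl.
by rewrite mulr_natl.
Qed.

Lemma sum_ind n (i : 'I_n) : \sum_k (k == i)%:R = 1 :> R.
Proof. by rewrite -[RHS](@sum_delta R n i (fun _ => 1)); apply: eq_bigr => k _; rewrite mulr1. Qed.

End Aux.


Section Emb.
Variables (R : realType) (N d : nat) (hd : (N <= d)%N).

Lemma trD m n (A B : 'M[R]_(m, n)) : (A + B)^T = A^T + B^T.
Proof. by apply/matrixP => i j; rewrite !mxE. Qed.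
Lemma trB m n (A B : 'M[R]_(m, n)) : (A - B)^T = A^T - B^T.
Proof. by apply/matrixP => i j; rewrite !mxE. Qed.

Definition Emb : 'M[R]_(d, N) := \matrix_(r, u) (val r == val u)%:R.

Lemma EtE : Emb^T *m Emb = 1%:M.
Proof.
apply/matrixP => u w; rewrite !mxE.
have ud : (u < d)%N by apply: leq_trans hd.
rewrite (bigD1 (Ordinal ud)) //= big1 ?addr0.
  by rewrite !mxE /= eqxx mul1r.
move=> r /negPf hr; rewrite !mxE.
have -> : (val r == val u) = false.
  by apply/negbTE; apply: contraFN hr => /eqP h; apply/eqP/val_inj.
by rewrite mul0r.
Qed.

Definition Rot (Pi : 'M[R]_N) : 'M[R]_d := Emb *m Pi *m Emb^T + (1%:M - Emb *m Emb^T).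

Lemma Rot_mul Pi k (X : 'M[R]_(N, k)) : Rot Pi *m (Emb *m X) = Emb *m (Pi *m X).
Proof.
rewrite /Rot mulmxDl mulmxBl mul1mx -!mulmxA (mulmxA Emb^T) EtE mul1mx.
by rewrite subrr addr0.
Qed.

Lemma RotM X Y : Rot X *m Rot Y = Rot (X *m Y).
Proof.
rewrite {2}/Rot mulmxDr mulmxBr mulmx1 -!mulmxA Rot_mul.
rewrite (_ : Rot X *m (Emb *m Emb^T) = Emb *m (X *m Emb^T)); last by rewrite Rot_mul.
rewrite /Rot !mulmxA; congr (_ + _).
by rewrite addrC addrA addNr add0r.
Qed.

Lemma RotT X : (Rot X)^T = Rot X^T.
Proof. by rewrite /Rot trD trB trmx1 !trmx_mul !trmxK mulmxA. Qed.

Lemma Rot1 : Rot 1%:M = 1%:M.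
Proof. by rewrite /Rot mulmx1 addrC subrK. Qed.

Lemma Rot_orth Pi : Pi^T *m Pi = 1%:M -> orthogonal_mx (Rot Pi).
Proof. by move=> hP; rewrite /orthogonal_mx RotT RotM hP Rot1. Qed.
End Emb.


Section P0.
Variables (R : realType) (n p : nat) (hn : (0 < n)%N).
Variables (A B : 'I_p -> 'I_p -> R) (Cm Dm : 'M[R]_p).
Hypothesis hD : forall a b, (Dm^T *m Dm) a b = A a b + (n%:R - 1) * B a b.
Hypothesis hC : (n != 1)%N -> forall a b, (Cm^T *m Cm) a b = A a b - B a b.

Definition P0 : 'M[R]_(n * p) := \matrix_(r, u)
  (((pidx_inv r).1 == (pidx_inv u).1)%:R * Cm (pidx_inv r).2 (pidx_inv u).2 +
   n%:R^-1 * (Dm (pidx_inv r).2 (pidx_inv u).2 - Cm (pidx_inv r).2 (pidx_inv u).2)).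

Lemma P0E k c i a : P0 (pidx k c) (pidx i a) = (k == i)%:R * Cm c a + n%:R^-1 * (Dm c a - Cm c a).
Proof. by rewrite mxE !pidxK. Qed.

Lemma n0 : n%:R != 0 :> R.
Proof. by rewrite pnatr_eq0 -lt0n. Qed.

Lemma P0tP0 i a j b : (P0^T *m P0) (pidx i a) (pidx j b) = if i == j then A a b else B a b.
Proof.
rewrite mxE; under eq_bigr => r _ do rewrite mxE.
rewrite sum_pidx exchange_big /=.
under eq_bigr => c _ do (under eq_bigr => k _ do rewrite !P0E; rewrite sum_kron).
have key : forall x y : 'I_p, (Cm^T *m Cm) x y = \sum_c Cm c x * Cm c y.
  by move=> x y; rewrite mxE; apply: eq_bigr => c _; rewrite mxE.
have keyD : forall x y : 'I_p, (Dm^T *m Dm) x y = \sum_c Dm c x * Dm c y.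
  by move=> x y; rewrite mxE; apply: eq_bigr => c _; rewrite mxE.
have E1 : \sum_c ((i == j)%:R * (Cm c a * Cm c b) + Cm c a * (n%:R^-1 * (Dm c b - Cm c b)) +
    n%:R^-1 * (Dm c a - Cm c a) * Cm c b + n%:R * (n%:R^-1 * (Dm c a - Cm c a) * (n%:R^-1 * (Dm c b - Cm c b))))
   = (i == j)%:R * (Cm^T *m Cm) a b + n%:R^-1 * ((Dm^T *m Dm) a b - (Cm^T *m Cm) a b).
  rewrite key keyD -sumrB !mulr_sumr -big_split /=; apply: eq_bigr => c _.
  by field; exact: n0.
rewrite E1 hD.
have hn0 := n0.
case: (i =P j) => [eij|nij].
  have T1 : (true%:R : R) = 1 by [].
  rewrite T1 mul1r.
  have [n1|n1] := eqVneq n 1%N.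
    have -> : n%:R = 1 :> R by rewrite n1.
    rewrite invr1 mul1r; ring.
  rewrite hC //; field.
  exact: hn0.
have n1 : (n != 1)%N.
  apply/eqP => n1; apply: nij; apply/val_inj.
  have hi : (val i < 1)%N := leq_trans (ltn_ord i) (eq_leq n1).
  have hj : (val j < 1)%N := leq_trans (ltn_ord j) (eq_leq n1).
  by move: hi hj; rewrite !ltnS !leqn0 => /eqP -> /eqP ->.
have F1 : (false%:R : R) = 0 by [].
rewrite F1 mul0r add0r hC //; field.
exact: hn0.
Qed.
End P0.

Theorem proposition5
  (R : realType) (n p q d : nat) (hn : (0 < n)%N) (hd : (n * p <= d)%N)
  (I : Type) (cA : I -> 'M[R]_(n, q)) (cB : I -> 'M[R]_(n * p)) (cb : I -> R)
  (oA : 'M[R]_(n, q)) (oB : 'M[R]_(n * p))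
  (xc gc : 'I_q -> 'I_p)
  (C : set ('cV[R]_d -> R^o))
  (hCinv : forall (f : 'cV[R]_d -> R^o) (Q : 'M[R]_d),
      C f -> orthogonal_mx Q -> C (fun x => f (Q *m x)))
  (hinterp : forall (F : 'M[R]_(n, q)) (P : 'M[R]_(d, n * p)),
      pep_feasible cA cB cb F (P^T *m P) ->
      forall i : 'I_n, exists f, C f /\ interpolates xc gc F P i f)
  (hequiv : forall i j : 'I_n, agents_equivalent cA cB cb oA oB i j)
  (hopt : exists F G, pep_optimal cA cB cb oA oB F G) :
  let a1 : 'I_n := Ordinal hn in
  exists (F : 'M[R]_(n, q)) (P : 'M[R]_(d, n * p))
         (f : 'I_n -> 'cV[R]_d -> R^o) (Rm : 'I_n -> 'M[R]_d),
    pep_optimal cA cB cb oA oB F (P^T *m P) /\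
    (forall i, C (f i) /\ interpolates xc gc F P i (f i)) /\
    (forall i, orthogonal_mx (Rm i)) /\
    (forall (i : 'I_n) (a : 'I_p), locvar P i a = Rm i *m locvar P a1 a) /\
    (forall (i j : 'I_n) (k : 'I_q),
        f i (locvar P i (xc k)) = f j (locvar P j (xc k))) /\
    (forall (i : 'I_n) (x : 'cV[R]_d), f i x = f a1 ((Rm i)^T *m x)).
Proof.
move=> a1.
have [F0 [G0 hopt0]] := hopt.
set Fb := avgF R n q F0; set Gb := avgG R n p G0.
have hoptb : pep_optimal cA cB cb oA oB Fb Gb := @optimal_avg R n p q I cA cB cb oA oB hequiv F0 G0 hopt0.
have Finv i k : Fb i k = Fb a1 k by rewrite -{1}(tpermL a1 i) /Fb avgF_inv.
have Ginv : forall (t : {perm 'I_n}) u v, Gb (bp t u) (bp t v) = Gb u v.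
  by move=> t u v; rewrite /Gb avgG_inv.
have psdG : psd Gb by case: hoptb => -[].
set A := Am R n p Gb a1; set B := Bm R n p Gb a1.
have hn0 : n%:R != 0 :> R by rewrite pnatr_eq0 -lt0n.
have s1 : \sum_(i < n) (1 : R) = n%:R by rewrite sumr_const card_ord.
have hc1 : 0 <= (n%:R : R)^-1 by rewrite invr_ge0.
have [Dm hDm] := @chol R p _ (@psd_scale R p _ _ hc1 (@psd_cong R (n * p) p Gb (Sc R n p (fun _ => 1)) psdG)).
have hD : forall a b, (Dm^T *m Dm) a b = A a b + (n%:R - 1) * B a b.
  move=> a b; rewrite hDm mxE (@compress R n p Gb Ginv a1) s1.
  under eq_bigr do rewrite expr1n.
  rewrite s1 -/A -/B; field; exact: hn0.
have [Cm hC] : exists Cm : 'M[R]_p,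
    (n != 1)%N -> forall a b, (Cm^T *m Cm) a b = A a b - B a b.
  have [n1|n1] := eqVneq n 1%N; first by exists 0.
  have n2 : (1 < n)%N by rewrite ltn_neqAle eq_sym n1 hn.
  set a2 : 'I_n := Ordinal n2.
  have a12 : a1 != a2 by [].
  set c := fun i : 'I_n => (i == a1)%:R - (i == a2)%:R : R.
  have sc : \sum_i c i = 0 by rewrite sumrB !sum_ind subrr.
  have sq : \sum_i c i ^+ 2 = 2.
    rewrite (eq_bigr (fun i => (i == a1)%:R + (i == a2)%:R)).
      by rewrite big_split /= !sum_ind.
    move=> i _; rewrite /c.
    have [->|h1] := eqVneq i a1; first by rewrite (negPf a12) /=; ring.
    have [_|h2] := eqVneq i a2; first by rewrite /=; ring.
    by rewrite /=; ring.
  have hc2 : 0 <= (2 : R)^-1 by rewrite invr_ge0.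
  have [Cm hCm] := @chol R p _ (@psd_scale R p _ _ hc2 (@psd_cong R (n * p) p Gb (Sc R n p c) psdG)).
  exists Cm => _ a b; rewrite hCm mxE (@compress R n p Gb Ginv a1) sc sq -/A -/B.
  by field.
set P0 := P0 R n p Cm Dm.
have P0G : P0^T *m P0 = Gb.
  apply/matrixP => u w; rewrite -[u]pidx_invK -[w]pidx_invK.
  by rewrite (@P0tP0 R n p hn A B Cm Dm hD hC) (@Gform R n p Gb Ginv a1).
set E := Emb R (n * p) d.
set P := E *m P0.
have PG : P^T *m P = Gb.
  by rewrite /P trmx_mul mulmxA -(mulmxA P0^T) (@EtE R (n * p) d hd) mulmx1 P0G.
have feas : pep_feasible cA cB cb Fb (P^T *m P) by rewrite PG; case: hoptb.
have [f1 [Cf1 If1]] := hinterp Fb P feas a1.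
pose tau (i : 'I_n) : {perm 'I_(n * p)} := perm (@bp_inj n p (tperm a1 i)).
pose Rm (i : 'I_n) : 'M[R]_d :=
  if i == a1 then 1%:M else Rot R (n * p) d (perm_mx (tau i)).
have Rorth i : orthogonal_mx (Rm i).
  rewrite /Rm; case: eqP => _; first by rewrite /orthogonal_mx trmx1 mul1mx.
  apply: (@Rot_orth R (n * p) d hd).
  by rewrite tr_perm_mx -perm_mxM mulVg perm_mx1.
have locP i a : locvar P i a = E *m col (pidx i a) P0.
  by rewrite /locvar /P colE -mulmxA -colE.
have hloc i a : locvar P i a = Rm i *m locvar P a1 a.
  rewrite /Rm; case: eqP => [->|/eqP ia1]; first by rewrite mul1mx.
  rewrite !locP (@Rot_mul R (n * p) d hd) -row_permE; congr (_ *m _).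
  apply/matrixP => r z; rewrite !mxE permE.
  rewrite -[r]pidx_invK ?bp_pidx !pidxK /=.
  by rewrite (canF_eq (tpermK a1 i)) tpermL.
have Ra1 : Rm a1 = 1%:M by rewrite /Rm eqxx.
have RTR i : (Rm i)^T *m Rm i = 1%:M := Rorth i.
have RRT i : (Rm i) *m (Rm i)^T = 1%:M := mulmx1C (Rorth i).
exists Fb, P, (fun i x => f1 ((Rm i)^T *m x)), Rm.
split; first by rewrite PG.
have fval i k : f1 ((Rm i)^T *m locvar P i (xc k)) = Fb i k.
  by rewrite hloc mulmxA RTR mul1mx (If1 k).1 Finv.
split.
  move=> i; split.
    apply: hCinv => //; rewrite /orthogonal_mx trmxK; exact: RRT.
  move=> k; split; first exact: fval.
  have := (If1 k).2; rewrite (hloc i (xc k)) (hloc i (gc k)).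
  set x1 := locvar P a1 (xc k); set g1 := locvar P a1 (gc k).
  move=> hg; have := @is_gradient_comp R d (Rm i)^T f1 (Rm i *m x1) g1.
  rewrite trmxK mulmxA RTR mul1mx; by apply.
split; first exact: Rorth.
split; first exact: hloc.
split; first by move=> i j k; rewrite !fval Finv (Finv j).
by move=> i x; rewrite Ra1 trmx1 mul1mx.
Qed.
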